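(* Assume the standing hypotheses (H). Let $A$ be a part of $G$ with $|A|=3$, let $\{u,v\}\subseteq A$ be a good pair for $A$, and let $x$ be the third vertex of $A$. Then \[\bigl|L(x)\cup (L(u)\cap L(v))\bigr|\ \ge\ k+\frac{k_3}{3}+k_4 .\]
   Context: A list assignment $L$ assigns to each vertex $v$ a set $L(v)$ of colors; an $L$-coloring is a proper coloring $f$ with $f(v)\in L(v)$ for all $v$; $\mathrm{ch}$ denotes choice number and $\chi$ chromatic number. A part of a complete multipartite graph is one of its maximal stable sets. Standing hypotheses (H): $k\ge1$ and $n\ge 2k+2$ are integers; $G$ is a complete $k$-partite graph (exactly $k$ nonempty parts) on $n$ vertices; $L$ is a list assignment for $G$ with $|L(v)|\ge\lceil (n+k-1)/3\rceil$ for every vertex $v$; $G$ has no $L$-coloring; $\left|\bigcup_{v\in V(G)}L(v)\right|\le n-1$; and every graph $H$ with fewer than $n$ vertices satisfies $\mathrm{ch}(H)\le\max\{\chi(H),\lceil(|V(H)|+\chi(H)-1)/3\rceil\}$. For $i\in\{1,2,3,4\}$, $k_i$ denotes the number of parts of $G$ of size $i$. For a part $A$ with $|A|\ge3$, a pair $\{u,v\}\subseteq A$ of distinct vertices is a good pair for $A$ if either $|A|=3$ and $|L(u)\cap L(v)|\ge\frac{k_1+k_4+1}{3}$, or $|A|=4$ and $|L(u)\cap L(v)|\ge|L(w)\cap L(z)|$ where $\{w,z\}=A\setminus\{u,v\}$. *)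

(* Defs.v *)
From mathcomp Require Import all_boot.
Set Implicit Arguments. Unset Strict Implicit. Unset Printing Implicit Defensive.

(* A (simple) graph is a symmetric irreflexive relation e on a finType T. *)

Definition colorableb (T : finType) (e : rel T) (c : nat) : bool :=
  [exists f : {ffun T -> 'I_c}, [forall x, forall y, e x y ==> (f x != f y)]].

Lemma colorable_card (T : finType) (e : rel T) :
  irreflexive e -> exists c, colorableb e c.
Proof.
move=> irr; exists #|T|; apply/existsP; exists [ffun x => enum_rank x].
apply/forallP=> x; apply/forallP=> y; apply/implyP=> exy.
rewrite !ffunE; apply/negP=> /eqP/enum_rank_inj Exy.
by move: exy; rewrite Exy irr.
Qed.

Definition chi (T : finType) (e : rel T) (irr : irreflexive e) : nat :=
  ex_minn (colorable_card irr).

Definition Lcoloring (T C : finType) (e : rel T) (L : T -> {set C}) (f : T -> C) : Prop :=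
  (forall v, f v \in L v) /\ (forall x y, e x y -> f x != f y).

Definition choosable (T : finType) (e : rel T) (m : nat) : Prop :=
  forall (C : finType) (L : T -> {set C}),
    (forall v, m <= #|L v|) -> exists f : T -> C, Lcoloring e L f.

(* complete multipartite graph on 'I_n with part function p : 'I_n -> 'I_k *)
Definition cmp_edge (n k : nat) (p : 'I_n -> 'I_k) : rel 'I_n :=
  fun u v => p u != p v.

Definition part (n k : nat) (p : 'I_n -> 'I_k) (j : 'I_k) : {set 'I_n} :=
  [set v | p v == j].

Definition nparts (n k : nat) (p : 'I_n -> 'I_k) (i : nat) : nat :=
  #|[set j : 'I_k | #|part p j| == i]|.

(* Main.v *)
Require Import Defs.
From mathcomp Require Import all_boot.
From mathcomp Require Import zify.

Lemma card_setE (I : finType) (P : pred I) :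
  #|[set j | P j]| = \sum_(j : I) (P j : nat).
Proof.
rewrite -sum1_card big_mkcond /=; apply: eq_bigr => j _.
by rewrite inE; case: (P j).
Qed.

Lemma sum_parts (n k : nat) (p : 'I_n -> 'I_k) :
  n = \sum_(j : 'I_k) #|part p j|.
Proof.
transitivity (\sum_(w : 'I_n) 1); first by rewrite sum1_card card_ord.
rewrite (partition_big p xpredT) //=; apply: eq_bigr => j _.
rewrite -sum1_card; apply: eq_bigl => w; by rewrite inE.
Qed.

Theorem lemma23 (n k : nat) (p : 'I_n -> 'I_k) (C : finType)
  (L : 'I_n -> {set C})
  (hk : 1 <= k) (hn : 2 * k + 2 <= n)
  (hsurj : forall j : 'I_k, exists v : 'I_n, p v = j)
  (hL : forall v, (n + k + 1) %/ 3 <= #|L v|)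
  (hnocol : ~ exists f : 'I_n -> C, Lcoloring (cmp_edge p) L f)
  (hunion : #|\bigcup_(v : 'I_n) L v| <= n - 1)
  (hmin : forall (T : finType) (e : rel T) (sym : symmetric e) (irr : irreflexive e),
      #|T| < n -> choosable e (maxn (chi irr) ((#|T| + chi irr + 1) %/ 3)))
  (a : 'I_k) (ha : #|part p a| = 3)
  (u v x : 'I_n) (hu : p u = a) (hv : p v = a) (hx : p x = a)
  (huv : u != v) (hxu : x != u) (hxv : x != v)
  (hgood : nparts p 1 + nparts p 4 + 1 <= 3 * #|L u :&: L v|) :
  3 * k + nparts p 3 + 3 * nparts p 4 <= 3 * #|L x :|: (L u :&: L v)|.
Proof.
have hdisj : L x :&: (L u :&: L v) = set0.
  apply/eqP; apply/negPn/negP => /set0Pn [c hc].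
  move: hc; rewrite !inE => /and3P [cx cu cv].
  apply: hnocol.
  have hpart : forall w, p w = a -> c \in L w.
    move=> w hw.
    have sub : [set u; v; x] \subset part p a.
      apply/subsetP => y; rewrite !inE; by case/orP => [/orP[]|] /eqP ->; rewrite ?hu ?hv ?hx.
    have c3 : #|[set u; v; x]| = 3.
      have -> : [set u; v; x] = x |: [set u; v] by rewrite setUC.
      by rewrite cardsU1 cards2 !inE huv (negbTE hxu) (negbTE hxv).
    have : [set u; v; x] == part p a by rewrite eqEcard sub ha c3.
    move/eqP => E; have : w \in part p a by rewrite inE hw.
    rewrite -E !inE; by case/orP => [/orP[]|] /eqP ->.
  pose T : finType := {w : 'I_n | p w != a}.
  pose e : rel T := fun w y => cmp_edge p (val w) (val y).
  have sym : symmetric e by move=> w y; rewrite /e /cmp_edge eq_sym.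
  have irr : irreflexive e by move=> w; rewrite /e /cmp_edge eqxx.
  have cardT : #|T| = n - 3.
    rewrite card_sig (@eq_card _ _ (~: part p a)); last by move=> w; rewrite !inE.
    by rewrite cardsCs setCK card_ord ha.
  have hTn : #|T| < n by rewrite cardT; lia.
  have hchi : chi irr <= k.
    rewrite /chi; case: ex_minnP => m _ Hm; apply: Hm.
    apply/existsP; exists [ffun w => p (val w)].
    apply/forallP => w; apply/forallP => y; apply/implyP.
    by rewrite !ffunE.
  have [f [fL fP]] : exists f : T -> C, Lcoloring e (fun w => L (val w) :\ c) f.
    apply: (hmin T e sym irr hTn) => w; have := hL (val w); have := cardsD1 c (L (val w)).
    rewrite geq_max cardT; case: (c \in L (val w)) => /=; lia.
  exists (fun w => if insub w is Some w' then f w' else c); split.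
    move=> w; case: insubP => [w' _ <-|].
      by have := fL w'; rewrite inE => /andP [].
    by move/negbNE/eqP; apply: hpart.
  move=> w y; rewrite /cmp_edge => hwy.
  case: (insubP T w) => [w' hw' ew|hw]; case: (insubP T y) => [y' hy' ey|hy]; try subst w; try subst y.
  - by apply: fP; rewrite /e /cmp_edge.
  - by move: (fL w'); rewrite /= !inE => /andP [h _].
  - by move: (fL y'); rewrite /= !inE eq_sym => /andP [h _].
  - by move: hw hy hwy => /negbNE/eqP -> /negbNE/eqP ->; rewrite eqxx.
have -> : #|L x :|: (L u :&: L v)| = #|L x| + #|L u :&: L v|
  by rewrite -cardsUI hdisj cards0 addn0.
have h1 := hL x.
have hs := sum_parts n k p.
have np : forall i, nparts p i = \sum_(j : 'I_k) (#|part p j| == i : nat)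
  by move=> i; rewrite /nparts card_setE.
rewrite !np in hgood *.
have key : 2 * k + \sum_(j : 'I_k) (#|part p j| == 3 : nat) + 2 * \sum_(j : 'I_k) (#|part p j| == 4 : nat)
   <= \sum_(j : 'I_k) #|part p j| + \sum_(j : 'I_k) (#|part p j| == 1 : nat).
  have -> : 2 * k = \sum_(j : 'I_k) 2 by rewrite sum_nat_const card_ord mulnC.
  rewrite big_distrr /= -!big_split /=; apply: leq_sum => j _.
  have : 0 < #|part p j|.
    have [w hw] := hsurj j; apply/card_gt0P; exists w; by rewrite inE hw.
  by case: #|part p j| => [|[|[|[|[|s]]]]].
lia.
Qed.
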